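(* Let $s,r,u\in \mathcal{X}$, $s=(s_1,\dots, s_n)$, $r=(r_1,\dots, r_n)$, $u=(u_1,\dots,u_n)$, lie in pairwise different orbits with $\mathbb{F}_{q^m}=\mathbb{F}_q(r_1)=\mathbb{F}_q(s_1)$. Then there exists $F\in \mathrm{TA}_n(\mathbb{F}_q)$ such that $F([r])=[s]$ and $F([u])=[u]$.
   Context: Fix $m$, a prime power $q$, $n\geq 3$. $\Delta=\mathrm{Gal}(\mathbb{F}_{q^m}:\mathbb{F}_q)$ acts coordinatewise on $\mathbb{F}_{q^m}^n$; $[v]$ denotes the $\Delta$-orbit of $v$, and $\mathcal{X}$ is the union of orbits of size $m$. $\mathrm{TA}_n(\mathbb{F}_q)$ is the tame automorphism group generated by invertible affine maps and triangular maps $(a_1X_1+f_1,\dots,a_nX_n+f_n)$, $a_i\in\mathbb{F}_q^*$, $f_i\in\mathbb{F}_q[X_{i+1},\dots,X_n]$; it acts on orbits since its elements commute with $\Delta$. *)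

(* Defs.v *)
From HB Require Import structures.
From mathcomp Require Import all_boot all_order all_algebra all_fingroup all_field.
From mathcomp Require Import mpoly.
Set Implicit Arguments. Unset Strict Implicit. Unset Printing Implicit Defensive.
Import GRing.Theory.
Local Open Scope ring_scope.

Section Defs.
(* F plays F_q, L plays F_{q^m} with m = \dim_F L. *)
Variables (F : finFieldType) (L : fieldExtType F) (n : nat).

(* Delta = Gal(L/F): F-linear ring automorphisms of L (mathcomp's kAut). *)
Definition inDelta (f : 'End(L)) : Prop := kAut 1%VS fullv f.

Definition dorbit (v w : 'rV[L]_n) : Prop :=
  exists2 f : 'End(L), inDelta f & w = map_mx f v.

Definition orbit_size (v : 'rV[L]_n) (k : nat) : Prop :=
  exists s : seq 'rV[L]_n, [/\ uniq s, size s = k & forall w, dorbit v w <-> w \in s].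

Definition inX (v : 'rV[L]_n) : Prop := orbit_size v (\dim (fullv : {vspace L})).

Definition polymap := n.-tuple {mpoly F[n]}.

Definition pm_comp (P Q : polymap) : polymap := [tuple tnth P i \mPo Q | i < n].

Definition affine_inv (P : polymap) : Prop :=
  exists (A : 'M[F]_n) (b : 'rV[F]_n), A \in unitmx /\
    forall i : 'I_n, tnth P i = \sum_(j < n) A i j *: 'X_j + (b 0 i)%:MP.

Definition triangular (P : polymap) : Prop :=
  exists (a : 'I_n -> F) (f : 'I_n -> {mpoly F[n]}),
    (forall i, a i != 0) /\
    (forall i, forall mon, mon \in msupp (f i) ->
        forall j : 'I_n, (j <= i)%N -> mon j = 0%N) /\
    (forall i, tnth P i = a i *: 'X_i + f i).

(* TA_n(F_q): closure of affine and triangular maps under composition.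
   Since inverses of generators are generators, this is the generated group. *)
Inductive tame : polymap -> Prop :=
  | tame_aff P : affine_inv P -> tame P
  | tame_tri P : triangular P -> tame P
  | tame_comp P Q : tame P -> tame Q -> tame (pm_comp P Q).

Definition pm_app (P : polymap) (v : 'rV[L]_n) : 'rV[L]_n :=
  \row_i (map_mpoly (in_alg L) (tnth P i)).@[fun j => v 0 j].

End Defs.

(* Main.v *)
Require Import Defs.
From HB Require Import structures.
From mathcomp Require Import all_boot all_order all_algebra all_fingroup all_field.
From mathcomp Require Import mpoly.
From Stdlib Require Classical_Prop.
Set Implicit Arguments. Unset Strict Implicit. Unset Printing Implicit Defensive.
Import GRing.Theory.
Local Open Scope ring_scope.

Section S.
Variables (F : finFieldType) (L : fieldExtType F) (n : nat).

Definition Lpd (p : {poly F}) := map_poly (in_alg L) p.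
Local Notation Lp := Lpd.
Definition Ev (w : 'I_n -> L) : {mpoly F[n]} -> L := meval w \o map_mpoly (in_alg L).
HB.instance Definition _ w := GRing.RMorphism.copy (Ev w) (meval w \o map_mpoly (in_alg L)).
Lemma EvC w c : Ev w c%:MP = in_alg L c.
Proof. by rewrite /Ev /= map_mpolyC mevalC. Qed.
Lemma EvX w i : Ev w 'X_i = w i.
Proof. by rewrite /Ev /= map_mpolyX mevalXU. Qed.

Lemma Ev_eq w1 w2 p : w1 =1 w2 -> Ev w1 p = Ev w2 p.
Proof. by move=> h; rewrite /Ev /= (meval_eq _ h). Qed.
Lemma EvE w p : Ev w p = \sum_(m <- msupp p) in_alg L p@_m * \prod_i w i ^+ m i.
Proof.
rewrite /Ev /= mevalE.
rewrite (perm_big _ (msupp_map_mpoly _ _ )); last exact: fmorph_inj.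
by apply: eq_bigr => m _; rewrite mcoeff_map_mpoly.
Qed.

Lemma Ev_comp w p (lq : n.-tuple {mpoly F[n]}) :
  Ev w (p \mPo lq) = Ev (fun i => Ev w (tnth lq i)) p.
Proof.
rewrite comp_mpolyE rmorph_sum EvE; apply: eq_bigr => m _.
rewrite -mul_mpolyC rmorphM /= EvC rmorph_prod /=; congr (_ * _);
  apply: eq_bigr => i _; by rewrite rmorphXn.
Qed.

Lemma pm_appE (P : polymap F n) (v : 'rV[L]_n) i : pm_app P v 0 i = Ev (fun j => v 0 j) (tnth P i).
Proof. by rewrite /pm_app mxE. Qed.

Lemma pm_app_comp (P Q : polymap F n) (v : 'rV[L]_n) :
  pm_app (pm_comp P Q) v = pm_app P (pm_app Q v).
Proof.
apply/rowP => i; rewrite !pm_appE /pm_comp tnth_mktuple Ev_comp.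
by apply: Ev_eq => j; rewrite pm_appE.
Qed.

Lemma Delta_fix (f : 'End(L)) x : inDelta f -> x \in 1%VS -> f x = x.
Proof. by case/andP => /kHomP_tmp[idf _] _; apply: idf. Qed.
Lemma Delta_mul (f : 'End(L)) x y : inDelta f -> f (x * y) = f x * f y.
Proof. by case/andP => /kHomP_tmp[_ fM] _; apply: fM; rewrite memvf. Qed.
Lemma Delta_alg (f : 'End(L)) c : inDelta f -> f (in_alg L c) = in_alg L c.
Proof. by move=> hf; rewrite Delta_fix // memvZ // mem1v. Qed.
Lemma Delta1 (f : 'End(L)) : inDelta f -> f 1 = 1.
Proof. by move=> hf; rewrite Delta_fix // mem1v. Qed.
Lemma Delta_exp (f : 'End(L)) x k : inDelta f -> f (x ^+ k) = f x ^+ k.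
Proof.
move=> hf; elim: k => [|k IH]; first by rewrite !expr0 Delta1.
by rewrite !exprS Delta_mul // IH.
Qed.
Lemma Delta_prod (f : 'End(L)) (g : 'I_n -> L) : inDelta f ->
  f (\prod_i g i) = \prod_i f (g i).
Proof.
move=> hf; apply: (big_ind2 (fun a b => f a = b)); first exact: Delta1.
  by move=> a1 b1 a2 b2 <- <-; rewrite Delta_mul.
by [].
Qed.
Lemma Delta_Ev (f : 'End(L)) w p : inDelta f -> f (Ev w p) = Ev (fun i => f (w i)) p.
Proof.
move=> hf; rewrite !EvE linear_sum; apply: eq_bigr => m _.
transitivity (f (in_alg L p@_m) * f (\prod_i w i ^+ m i)); first exact: Delta_mul.
rewrite Delta_alg // Delta_prod //; congr (_ * _).
by apply: eq_bigr => i _; rewrite Delta_exp.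
Qed.
Lemma Delta_pm_app (f : 'End(L)) (P : polymap F n) (v : 'rV[L]_n) : inDelta f ->
  map_mx f (pm_app P v) = pm_app P (map_mx f v).
Proof.
move=> hf; apply/rowP => i; rewrite mxE !pm_appE Delta_Ev //.
by apply: Ev_eq => j; rewrite mxE.
Qed.

Definition Pm (s : {perm 'I_n}) : polymap F n := [tuple 'X_(s i) | i < n].
Lemma Pm_affine s : affine_inv (Pm s).
Proof.
exists (perm_mx s), 0; split; first exact: unitmx_perm.
move=> i; rewrite tnth_mktuple mxE rmorph0 addr0 (bigD1 (s i)) //= big1 ?addr0.
  by rewrite /perm_mx /row_perm !mxE eqxx scale1r.
by move=> j /negbTE nj; rewrite /perm_mx /row_perm !mxE eq_sym nj scale0r.
Qed.
Lemma Pm_app s (v : 'rV[L]_n) : pm_app (Pm s) v = \row_i v 0 (s i).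
Proof. by apply/rowP => i; rewrite pm_appE tnth_mktuple EvX mxE. Qed.

Definition nodep (i : 'I_n) (p : {mpoly F[n]}) := forall m, m \in msupp p -> m i = 0%N.
Lemma msupp_0 : msupp (0 : {mpoly F[n]}) = [::].
Proof. by apply/eqP; rewrite msupp_eq0. Qed.
Lemma nodep0 i : nodep i 0.
Proof. by move=> m; rewrite msupp_0. Qed.
Lemma nodepC i c : nodep i c%:MP.
Proof. by move=> m; rewrite msuppC; case: eqP => // _; rewrite inE => /eqP ->; rewrite mnm0E. Qed.
Lemma nodepX i j : j != i -> nodep i 'X_j.
Proof. by move=> nji m; rewrite msuppX inE => /eqP ->; rewrite mnm1E (negbTE nji). Qed.
Lemma nodepD i p q : nodep i p -> nodep i q -> nodep i (p + q).
Proof. by move=> hp hq m /msuppD_le; rewrite mem_cat => /orP[/hp|/hq]. Qed.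
Lemma nodepB i p q : nodep i p -> nodep i q -> nodep i (p - q).
Proof. by move=> hp hq m /msuppB_le; rewrite mem_cat => /orP[/hp|/hq]. Qed.
Lemma nodepM i p q : nodep i p -> nodep i q -> nodep i (p * q).
Proof.
move=> hp hq m /msuppM_le /allpairsP [[m1 m2] /= [h1 h2 ->]].
by rewrite mnmDE hp // hq.
Qed.
Lemma nodepXn i p k : nodep i p -> nodep i (p ^+ k).
Proof.
move=> hp; elim: k => [|k IH]; first by rewrite expr0 -[1]/(1%:MP) ; exact: nodepC.
by rewrite exprS; apply: nodepM.
Qed.
Lemma nodep_sum i (I : Type) (r : seq I) (G : I -> {mpoly F[n]}) :
  (forall k, nodep i (G k)) -> nodep i (\sum_(k <- r) G k).
Proof.
move=> h; elim: r => [|k r IH]; first by rewrite big_nil; exact: nodep0.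
by rewrite big_cons; apply: nodepD.
Qed.

Definition Upoly (p : {poly F}) (x : {mpoly F[n]}) := (map_poly (@mpolyC n F) p).[x].
Lemma nodep_Upoly i p x : nodep i x -> nodep i (Upoly p x).
Proof.
move=> hx; rewrite /Upoly horner_coef; apply: nodep_sum => k.
by rewrite coef_map; apply: nodepM; [exact: nodepC | exact: nodepXn].
Qed.
Lemma Ev_Upoly w p x : Ev w (Upoly p x) = (map_poly (in_alg L) p).[Ev w x].
Proof.
rewrite /Upoly -horner_map -map_poly_comp; congr (_.[_]).
by apply: eq_map_poly => c /=; rewrite EvC.
Qed.

Section Shear.
Variables (i0 : 'I_n) (hi0 : nat_of_ord i0 = 0%N).

Definition Tsh (G : {mpoly F[n]}) : polymap F n :=
  [tuple 'X_i + (if i == i0 then G else 0) | i < n].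
Lemma Tsh_tri G : nodep i0 G -> triangular (Tsh G).
Proof.
move=> hG; exists (fun _ => 1), (fun i => if i == i0 then G else 0); split => //.
  by move=> i; apply: oner_neq0.
split; last by move=> i; rewrite tnth_mktuple scale1r.
move=> i mon; case: eqP => [-> hm j hj|_]; last by rewrite msupp_0.
have -> : j = i0 by move: hj; rewrite hi0 leqn0 => /eqP hj; apply: val_inj; rewrite /= hj hi0.
exact: hG.
Qed.
Lemma Tsh_app G (v : 'rV[L]_n) : pm_app (Tsh G) v =
  \row_i (v 0 i + (if i == i0 then Ev (fun j => v 0 j) G else 0)).
Proof.
apply/rowP => i; rewrite pm_appE tnth_mktuple !mxE rmorphD /= EvX.
by case: eqP => _; rewrite ?rmorph0.
Qed.

Definition Gt (q m phi : {poly F}) (a b : 'I_n) :=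
  Upoly q 'X_a * Upoly m ('X_b - Upoly phi 'X_a).
Definition gval (q m phi : {poly F}) (x : 'I_n -> L) (a b : 'I_n) :=
  (Lp q).[x a] * (Lp m).[x b - (Lp phi).[x a]].
Lemma Ev_Gt q m phi x a b : Ev x (Gt q m phi a b) = gval q m phi x a b.
Proof. by rewrite /Gt rmorphM /= !Ev_Upoly raddfB /= Ev_Upoly !EvX. Qed.

Lemma shear q m phi (j a b : 'I_n) : a != j -> b != j ->
  exists P, tame P /\ forall v : 'rV[L]_n, pm_app P v =
    \row_i (v 0 i + (if i == j then gval q m phi (fun k => v 0 k) a b else 0)).
Proof.
move=> aj bj; pose t := tperm i0 j.
have tj : t j = i0 by rewrite tpermR.
have tt : forall k, t (t k) = k by move=> k; rewrite tpermK.
have tE : forall k, (t k == i0) = (k == j) by move=> k; rewrite -tj (inj_eq perm_inj).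
exists (pm_comp (Pm t) (pm_comp (Tsh (Gt q m phi (t a) (t b))) (Pm t))); split.
  apply: tame_comp; first by apply: tame_aff; apply: Pm_affine.
  apply: tame_comp; last by apply: tame_aff; apply: Pm_affine.
  apply: tame_tri; apply: Tsh_tri.
  apply: nodepM; apply: nodep_Upoly; first by apply: nodepX; rewrite tE.
  by apply: nodepB; [apply: nodepX; rewrite tE | apply: nodep_Upoly; apply: nodepX; rewrite tE].
move=> v; rewrite !pm_app_comp !Pm_app Tsh_app; apply/rowP => i.
rewrite !mxE tE tt; case: eqP => // _; congr (_ + _).
by rewrite Ev_Gt /gval !mxE !tt.
Qed.
End Shear.

Lemma gen_poly (x y : L) : <<1; x>>%VS = fullv -> exists p, (Lp p).[x] = y.
Proof.
move=> hx; have : y \in <<1; x>>%VS by rewrite hx memvf.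
by case/Fadjoin1_polyP => p ->; exists p.
Qed.

Lemma Delta_horner (f : 'End(L)) p x : inDelta f -> f ((Lp p).[x]) = (Lp p).[f x].
Proof.
move=> hf; have hK : kHom 1%AS fullv f by case/andP: hf.
rewrite (kHom_horner hK) ?memvf ?alg_polyOver //.
by rewrite (kHom_poly_id hK) // alg_polyOver.
Qed.

Lemma same_on_gen (f g : 'End(L)) x : <<1; x>>%VS = fullv -> inDelta f -> inDelta g ->
  f x = g x -> forall y, f y = g y.
Proof.
move=> hx hf hg e y; have [p <-] := gen_poly y hx.
by rewrite !Delta_horner // e.
Qed.

Lemma normality (x y : L) : <<1; x>>%VS = fullv -> root (minPoly 1 x) y ->
  exists2 f, inDelta f & f x = y.
Proof.
move=> hx hr.
have hr' : root (map_poly \1%VF (minPoly 1 x)) y.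
  by rewrite (kHom_poly_id (kHom1 1 1)) ?minPolyOver.
exists (kHomExtend 1 \1%VF x y); last by apply: (kHomExtend_val (kHom1 1%AS 1%AS)); rewrite ?minPoly_XsubC ?hr'.
rewrite /inDelta kAutfE -hx.
exact: (kHomExtendP (sub1v _) (kHom1 1 1) hr').
Qed.

Lemma minPoly0 (d : L) : d != 0 -> (minPoly 1 d).[0] != 0.
Proof.
move=> nd; apply/negP => /eqP h0.
have hroot : root (minPoly 1 d) 0 by apply/rootP.
have : 'X %| minPoly 1 d by move: hroot; rewrite root_factor_theorem subr0.
move/(minPoly_irr (polyOverX _)) => /orP[hX|hX1].
  by move: (root_minPoly 1 d); rewrite -(eqp_root hX) rootX (negbTE nd).
by move: (eqp_size hX1); rewrite size_polyX size_poly1.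
Qed.

Lemma minPolyF (d : L) : exists m0, minPoly 1 d = Lp m0.
Proof. by have /polyOver1P[m0 ->] := minPolyOver 1 d; exists m0. Qed.

Section Main.
Variables (i0 : 'I_n) (hi0 : nat_of_ord i0 = 0%N) (u : 'rV[L]_n).

Definition reach (v x : 'rV[L]_n) :=
  exists P : polymap F n, [/\ tame P, pm_app P v = x & pm_app P u = u].

Lemma reach_trans v x y : reach v x -> reach x y -> reach v y.
Proof.
case=> [P [tP e1 e2]] [Q [tQ e3 e4]]; exists (pm_comp Q P); split.
- exact: tame_comp.
- by rewrite pm_app_comp e1.
- by rewrite pm_app_comp e2.
Qed.

Lemma pm_id_app (v : 'rV[L]_n) : pm_app (Pm 1) v = v.
Proof. by rewrite Pm_app; apply/rowP => i; rewrite !mxE perm1. Qed.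

Lemma reach_refl v : reach v v.
Proof. by exists (Pm 1); split; rewrite ?pm_id_app //; apply: tame_aff; apply: Pm_affine. Qed.

Lemma step (v x : 'rV[L]_n) (j : 'I_n) :
  (forall i, i != j -> x 0 i = v 0 i) ->
  (exists2 k0, k0 != j & <<1; v ord0 k0>>%VS = fullv) ->
  (forall f, inDelta f -> exists2 k, k != j & u 0 k != f (v 0 k)) ->
  reach v x.
Proof.
move=> hx [k0 k0j hgen] hw.
have [a [b [phi [aj [bj [hgena [hv hd]]]]]]] : exists a b phi, [/\ a != j, b != j,
    <<1; v ord0 a>>%VS = fullv, (Lp phi).[v 0 a] = v 0 b & u 0 b - (Lp phi).[u 0 a] != 0].
  have [h0 eh0] := minPolyF (v 0 k0).
  have [nz | z] := boolP ((Lp h0).[u 0 k0] != 0).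
    exists k0, k0, ('X - h0); split => //.
      by rewrite /Lpd rmorphB /= map_polyX hornerD hornerN hornerX -/(Lpd _) -eh0 minPolyxx subr0.
    by rewrite /Lpd rmorphB /= map_polyX hornerD hornerN hornerX -/(Lpd _) opprB addrC subrK.
  have hr : root (minPoly 1 (v 0 k0)) (u 0 k0) by rewrite eh0; apply/rootP; apply/eqP; rewrite -[_ == _]negbK z.
  have [f hf fe] := normality hgen hr.
  have [k kj hk] := hw f hf.
  have [phi ephi] := gen_poly (v 0 k) hgen.
  exists k0, k, phi; split => //.
  by rewrite -fe -Delta_horner // ephi subr_eq0.
have [m0 em0] := minPolyF (u 0 b - (Lp phi).[u 0 a]).
have c0nz : (Lp m0).[0] != 0 by rewrite -em0 minPoly0.
have [q eq] := gen_poly ((x 0 j - v 0 j) / (Lp m0).[0]) hgena.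
have [P [tP hP]] := shear hi0 q m0 phi aj bj.
exists P; split => //.
  apply/rowP => i; rewrite hP mxE; case: eqP => [->|/eqP nij]; last by rewrite addr0 hx.
  by rewrite /gval eq hv subrr divfK // addrC subrK.
apply/rowP => i; rewrite hP mxE; case: eqP => _; last by rewrite addr0.
by rewrite /gval -em0 minPolyxx mulr0 addr0.
Qed.

Definition conn v x := reach v x /\ reach x v.
Lemma conn_trans v x y : conn v x -> conn x y -> conn v y.
Proof. by case=> h1 h2 [h3 h4]; split; [apply: reach_trans h3 | apply: reach_trans h2]. Qed.
Lemma conn_sym v x : conn v x -> conn x v.
Proof. by case. Qed.
Lemma conn_refl v : conn v v.
Proof. by split; apply: reach_refl. Qed.

Lemma step_conn (v x : 'rV[L]_n) (j : 'I_n) :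
  (forall i, i != j -> x 0 i = v 0 i) ->
  (exists2 k0, k0 != j & <<1; v ord0 k0>>%VS = fullv) ->
  (forall f, inDelta f -> exists2 k, k != j & u 0 k != f (v 0 k)) ->
  conn v x.
Proof.
move=> hx [k0 k0j hg] hw; split; first by apply: step hx _ hw; exists k0.
apply: step.
- by move=> i /hx ->.
- by exists k0 => //; rewrite (hx _ k0j).
- by move=> f /hw [k kj hk]; exists k => //; rewrite (hx _ kj).
Qed.

Definition yv (k : 'I_n) : L := if u 0 k == 0 then 1 else 0.
Lemma yv_good k f : inDelta f -> u 0 k != f (yv k).
Proof.
move=> hf; rewrite /yv; have [e|nz] := eqVneq (u 0 k) 0.
  by rewrite e Delta1 // eq_sym oner_neq0.
by rewrite linear0.
Qed.

Lemma nd_diff (v : 'rV[L]_n) f : ~ dorbit v u -> inDelta f -> exists k, u 0 k != f (v 0 k).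
Proof.
move=> nd hf; have [k hk|h] := pickP (fun k => u 0 k != f (v 0 k)); first by exists k.
exfalso; apply: nd; exists f => //.
by apply/rowP => k; rewrite mxE; apply/eqP; move: (h k) => /negbFE.
Qed.

Variables (i1 i2 : 'I_n) (h10 : i1 != i0) (h20 : i2 != i0) (h21 : i2 != i1).

Definition Gc (c : L) : 'rV[L]_n := \row_i (if i == i0 then c else yv i).

Lemma phase1 (v : 'rV[L]_n) : <<1; v ord0 i0>>%VS = fullv -> ~ dorbit v u ->
  conn v (Gc (v 0 i0)).
Proof.
move=> hg nd; set c := v 0 i0.
have [j1 [j1i0 hW]] : exists j1, j1 != i0 /\
    forall f, inDelta f -> exists2 k, k != j1 & u 0 k != f (v 0 k).
  have [[sg hsg hsc]|ns] := Classical_Prop.classic (exists2 sg, inDelta sg & sg c = u 0 i0).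
    have [ks hks] := nd_diff nd hsg.
    have ksi0 : ks != i0 by apply: contraNneq hks => ->; rewrite hsc.
    exists (if ks == i1 then i2 else i1); split; first by case: (ks == i1).
    move=> f hf; have [fe | fne] := eqVneq (f c) (sg c).
      exists ks; first by case: ifP => [/eqP ->|/negbT]; rewrite // eq_sym.
      by rewrite (same_on_gen hg hf hsg fe).
    exists i0; first by case: ifP => _; rewrite eq_sym.
    by rewrite -hsc eq_sym.
  exists i1; split => // f hf; exists i0; first by rewrite eq_sym.
  by apply/eqP => e; apply: ns; exists f.
pose z1 : 'rV[L]_n := \row_i (if i == j1 then yv j1 else v 0 i).
have c1 : conn v z1.
  apply: (step_conn (j := j1)); last exact: hW.
    by move=> i /negbTE ni; rewrite mxE ni.
  by exists i0; rewrite // eq_sym.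
apply: conn_trans c1 _.
pose Gi (i : 'I_n) : L := if i == i0 then c else yv i.
pose w t : 'rV[L]_n := \row_i (if (i < t)%N || (i == j1) then Gi i else v 0 i).
have w0 : w 0%N = z1 by apply/rowP => i; rewrite !mxE /=; case: eqP => // ->; rewrite /Gi (negbTE j1i0).
have wn : w n = Gc c by apply/rowP => i; rewrite !mxE ltn_ord.
rewrite -w0 -wn.
have : (n <= n)%N by [].
elim: {-2}n => [|t IH] ht; first exact: conn_refl.
apply: conn_trans (IH (ltnW ht)) _.
pose it : 'I_n := Ordinal ht.
have hwi : forall i, i != it -> w t.+1 0 i = w t 0 i.
  move=> i nit; rewrite !mxE ltnS leq_eqVlt.
  by have -> : (nat_of_ord i == t) = false by apply/negbTE; apply: contra nit => /eqP e; apply/eqP/val_inj.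
have [eq1 | ne1] := boolP ((it == j1) || (it == i0)).
  have -> : w t.+1 = w t; last exact: conn_refl.
  apply/rowP => i; have [->|nit] := eqVneq i it; last by rewrite hwi.
  rewrite !mxE ltnS leqnn /=; case/orP: eq1 => [/eqP->|/eqP ->]; first by rewrite eqxx orbT.
  by rewrite /Gi eqxx; case: (_ || _).
move: ne1; rewrite negb_or => /andP[nj1 ni0].
apply: (step_conn (j := it)) => //.
  exists i0; first by rewrite eq_sym.
  by rewrite mxE /Gi eqxx; case: (_ || _).
move=> f hf; exists j1; first by rewrite eq_sym.
by rewrite mxE eqxx orbT /Gi (negbTE j1i0) yv_good.
Qed.

Definition Qp (c e : L) : 'rV[L]_n :=
  \row_i (if i == i0 then c else if i == i1 then e else yv i).

Lemma Gc_Qp c : Gc c = Qp c (yv i1).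
Proof. by apply/rowP => i; rewrite !mxE; case: eqP => // _; case: eqP => // ->. Qed.

Lemma main_reach (r s : 'rV[L]_n) :
  <<1; r ord0 i0>>%VS = fullv -> <<1; s ord0 i0>>%VS = fullv ->
  ~ dorbit r u -> ~ dorbit s u -> reach r s.
Proof.
move=> hr hs nr ns.
have c1 := phase1 hr nr; have c5 := phase1 hs ns.
set a := r 0 i0 in c1; set b := s 0 i0 in c5.
have ha : <<1; a>>%VS = fullv by [].
have hb : <<1; b>>%VS = fullv by [].
have w2 : forall c e f, inDelta f -> u 0 i2 != f (Qp c e 0 i2).
  by move=> c e f hf; rewrite mxE (negbTE h20) (negbTE h21) yv_good.
have c2 : forall c e e', <<1; c>>%VS = fullv -> conn (Qp c e) (Qp c e').
  move=> c e e' hc; apply: (step_conn (j := i1)).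
  - by move=> i /negbTE ni; rewrite !mxE ni.
  - by exists i0; [rewrite eq_sym | rewrite mxE eqxx].
  - by move=> f hf; exists i2 => //; apply: w2.
have c3 : conn (Qp a a) (Qp b a).
  apply: (step_conn (j := i0)).
  - by move=> i /negbTE ni; rewrite !mxE ni.
  - by exists i1 => //; rewrite mxE (negbTE h10) eqxx.
  - by move=> f hf; exists i2 => //; apply: w2.
rewrite Gc_Qp in c1; rewrite Gc_Qp in c5.
have := conn_trans c1 (conn_trans (c2 _ _ a ha) (conn_trans c3
   (conn_trans (c2 _ _ (yv i1) hb) (conn_sym c5)))).
by case.
Qed.
End Main.
End S.

Unset Implicit Arguments.
Theorem mainTheorem12 (F : finFieldType) (L : fieldExtType F) (n : nat)
    (s r u : 'rV[L]_n) :
  (3 <= n)%N ->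
  inX s -> inX r -> inX u ->
  ~ dorbit r s -> ~ dorbit r u -> ~ dorbit s u ->
  (forall i : 'I_n, val i = 0%N -> <<1%VS; r ord0 i>>%VS = fullv) ->
  (forall i : 'I_n, val i = 0%N -> <<1%VS; s ord0 i>>%VS = fullv) ->
  exists P : polymap F n, tame P /\
    (forall w, (exists2 v, dorbit r v & w = pm_app P v) <-> dorbit s w) /\
    (forall w, (exists2 v, dorbit u v & w = pm_app P v) <-> dorbit u w).
Proof.
move=> n3 _ _ _ _ nru nsu hr hs.
have l0 : (0 < n)%N by apply: leq_trans n3.
have l1 : (1 < n)%N by apply: leq_trans n3.
have l2 : (2 < n)%N by [].
pose i0 : 'I_n := Ordinal l0; pose i1 : 'I_n := Ordinal l1; pose i2 : 'I_n := Ordinal l2.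
have hi0 : nat_of_ord i0 = 0%N by [].
have [P [tP ePr ePu]] := @main_reach F L n i0 hi0 u i1 i2 isT isT isT r s
  (hr i0 erefl) (hs i0 erefl) nru nsu.
exists P; split => //; split => w; split.
- by case=> _ [f hf ->] ->; exists f => //; rewrite -Delta_pm_app // ePr.
- by case=> f hf ->; exists (map_mx f r); [exists f | rewrite -Delta_pm_app // ePr].
- by case=> _ [f hf ->] ->; exists f => //; rewrite -Delta_pm_app // ePu.
- by case=> f hf ->; exists (map_mx f u); [exists f | rewrite -Delta_pm_app // ePu].
Qed.
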